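(* Let $(d_i)_{i\ge1}$ be an alternate Lyndon word with alternate Lyndon system $M$, and suppose the entropy of $M$ equals $\log\beta>0$. Then $\beta$ is the largest real solution $x$ of $$-\frac{x}{x+1}=\sum_{n\ge1}\frac{d_n}{(-x)^n}.$$
   Context: Alternate order: for two words $x=x_1x_2\cdots$, $y=y_1y_2\cdots$ over a finite alphabet of integers, $x\prec y$ iff there is $k$ with $x_i=y_i$ for all $i<k$ and $(-1)^k(x_k-y_k)<0$; $x\preceq y$ iff $x=y$ or $x\prec y$. An alternate Lyndon word is an infinite word $(d_i)_{i\ge1}$ over a finite alphabet $\{0,\dots,d_1\}$ with $d_1d_2\cdots\preceq d_nd_{n+1}\cdots$ for all $n\ge1$. Its alternate Lyndon system $M$ is the set of infinite words $x_1x_2\cdots$ with $d_1d_2\cdots\preceq x_kx_{k+1}\cdots$ for all $k\ge1$. The entropy of $M$ is $\lim_{n\to\infty}\frac1n\log H_n$, where $H_n$ is the number of words of length $n$ occurring as finite factors of elements of $M$. *)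

(* Defs.v *)
From Stdlib Require Import Reals Lra Lia ZArith List Arith Classical ClassicalDescription.
Import ListNotations.
Open Scope R_scope.

(* Infinite words over nat are functions nat -> nat; position i (0-indexed)
   holds the letter x_{i+1} of the paper. *)
Definition word := nat -> nat.

Definition shift (x : word) (n : nat) : word := fun i => x (n + i)%nat.

(* Alternate order: x < y iff there is k (1-indexed) with x_i = y_i for i<k and
   (-1)^k (x_k - y_k) < 0.  With 0-indexed j = k-1 this is (-1)^(j+1)(x j - y j) < 0. *)
Definition alt_lt (x y : word) : Prop :=
  exists j : nat,
    (forall i, (i < j)%nat -> x i = y i) /\
    ((-1) ^ (Z.of_nat (S j)) * (Z.of_nat (x j) - Z.of_nat (y j)) < 0)%Z.

Definition alt_le (x y : word) : Prop := (forall i, x i = y i) \/ alt_lt x y.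

Definition alt_lyndon (d : word) : Prop :=
  (forall i, (d i <= d 0%nat)%nat) /\ forall n, alt_le d (shift d n).

Definition in_system (d x : word) : Prop := forall k, alt_le d (shift x k).

Definition is_factor (d : word) (n : nat) (w : list nat) : Prop :=
  length w = n /\
  exists (x : word) (k : nat), in_system d x /\
    forall i, (i < n)%nat -> nth i w 0%nat = x (k + i)%nat.

Fixpoint words (n m : nat) : list (list nat) :=
  match n with
  | O => [ [] ]
  | S n' => flat_map (fun a => map (cons a) (words n' m)) (seq 0 (S m))
  end.

(* H_n: the number of words of length n occurring as factors of elements of M.
   (Elements of M only use letters in {0,...,d_1}, so enumerating words over
   that alphabet counts all factors.) *)
Definition factor_count (d : word) (n : nat) : nat :=
  length (filter (fun w => if excluded_middle_informative (is_factor d n w)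
                           then true else false) (words n (d 0%nat))).

(* x is a real solution of  -x/(x+1) = sum_{n>=1} d_n / (-x)^n
   (the series is required to converge; x <> 0, x <> -1 so both sides make sense). *)
Definition is_solution (d : word) (x : R) : Prop :=
  x <> 0 /\ x + 1 <> 0 /\
  infinite_sum (fun j => INR (d j) / (- x) ^ (S j)) (- x / (x + 1)).

(* Main.v *)
Require Import Defs.
From Stdlib Require Import Reals.
From Stdlib Require Import Lra Lia ZArith List Arith Bool FunctionalExtensionality ClassicalDescription.
Import ListNotations.
Import Defs.

Fixpoint pre (n : nat) (z : word) : list nat :=
  match n with O => [] | S n => z 0%nat :: pre n (shift z 1) end.

Fixpoint ltw (s : bool) (u : list nat) (y : word) : bool :=
  match u with
  | [] => false
  | c :: u' => (if s then Nat.ltb (y 0%nat) c else Nat.ltb c (y 0%nat))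
               || (Nat.eqb c (y 0%nat) && ltw (negb s) u' (shift y 1))
  end.

Lemma shift_shift (z : word) a b : shift (shift z a) b = shift z (a + b).
Proof. apply functional_extensionality; intro i; unfold shift; f_equal; lia. Qed.

Lemma shift0 (z : word) : shift z 0 = z.
Proof. apply functional_extensionality; intro i; reflexivity. Qed.

Lemma pre_length n z : length (pre n z) = n.
Proof. revert z; induction n; simpl; auto. Qed.

Lemma pre_nth n z i : (i < n)%nat -> nth i (pre n z) 0%nat = z i.
Proof.
  revert z i; induction n; intros z i H; [lia|].
  destruct i; simpl; auto. rewrite IHn by lia. unfold shift; f_equal.
Qed.

Lemma ltw_pre_self s n y : ltw s (pre n y) y = false.
Proof.
  revert s y; induction n; intros s y; simpl; auto.
  rewrite Nat.eqb_refl, Nat.ltb_irrefl, IHn. destruct s; reflexivity.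
Qed.

Lemma ltw_excl s u y : ltw s u y = true -> ltw (negb s) u y = false.
Proof.
  revert s y; induction u as [|c u IH]; intros s y H; simpl in *; auto.
  destruct s; simpl in *;
  destruct (Nat.ltb_spec (y 0%nat) c), (Nat.ltb_spec c (y 0%nat)), (Nat.eqb_spec c (y 0%nat));
    simpl in *; try lia; auto.
  - apply IH in H. simpl in H. auto.
  - apply IH in H. simpl in H. auto.
Qed.

Lemma ltw_trich s u y :
  ltw s u y = true \/ ltw (negb s) u y = true \/ u = pre (length u) y.
Proof.
  revert s y; induction u as [|c u IH]; intros s y; simpl; auto.
  destruct (lt_eq_lt_dec c (y 0%nat)) as [[Hl|He]|Hl].
  - assert (E1: (y 0%nat <? c) = false) by (apply Nat.ltb_ge; lia).
    assert (E2: (c <? y 0%nat) = true) by (apply Nat.ltb_lt; lia).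
    assert (E3: (c =? y 0%nat) = false) by (apply Nat.eqb_neq; lia).
    rewrite E1, E2, E3. destruct s; simpl; auto.
  - subst c. rewrite Nat.ltb_irrefl, Nat.eqb_refl.
    destruct (IH (negb s) (shift y 1)) as [H|[H|H]].
    + left. rewrite H. destruct s; reflexivity.
    + right; left. rewrite H. destruct s; reflexivity.
    + right; right. rewrite <- H. reflexivity.
  - assert (E1: (y 0%nat <? c) = true) by (apply Nat.ltb_lt; lia).
    assert (E2: (c <? y 0%nat) = false) by (apply Nat.ltb_ge; lia).
    assert (E3: (c =? y 0%nat) = false) by (apply Nat.eqb_neq; lia).
    rewrite E1, E2, E3. destruct s; simpl; auto.
Qed.

Lemma ltw_app s u v y : ltw s u y = true -> ltw s (u ++ v) y = true.
Proof.
  revert s y; induction u as [|c u IH]; intros s y H; simpl in *; [discriminate|].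
  apply orb_true_iff in H; destruct H as [H|H].
  - rewrite H; auto.
  - apply andb_true_iff in H; destruct H as [H1 H2]. rewrite H1, IH; auto. apply orb_true_r.
Qed.

Lemma ltw_trans s u z w :
  (forall n, ltw s (pre n z) w = false) -> ltw s u w = true -> ltw s u z = true.
Proof.
  revert s z w; induction u as [|c u IH]; intros s z w Hz H; simpl in *; [discriminate|].
  pose proof (Hz 1%nat) as H1. simpl in H1. rewrite andb_false_r, orb_false_r in H1.
  apply orb_true_iff in H; destruct H as [H|H].
  - destruct s; apply Nat.ltb_lt in H; apply Nat.ltb_ge in H1; simpl;
      apply orb_true_iff; left; apply Nat.ltb_lt; lia.
  - apply andb_true_iff in H; destruct H as [He H]. apply Nat.eqb_eq in He. subst c.
    destruct (Nat.eqb_spec (w 0%nat) (z 0%nat)).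
    + rewrite e. rewrite (IH (negb s) (shift z 1) (shift w 1)); auto.
      * destruct s; apply orb_true_r.
      * intro n. specialize (Hz (S n)). simpl in Hz. rewrite e, Nat.eqb_refl in Hz.
        apply orb_false_iff in Hz. destruct Hz as [_ Hz]. simpl in Hz. exact Hz.
    + destruct s; apply Nat.ltb_ge in H1; simpl; apply orb_true_iff; left; apply Nat.ltb_lt; lia.
Qed.

Lemma ltw_witness s n x y : ltw s (pre n x) y = true ->
  exists j, (j < n)%nat /\ (forall i, (i < j)%nat -> x i = y i) /\
    (if Bool.eqb s (Nat.even j) then (y j < x j)%nat else (x j < y j)%nat).
Proof.
  revert s x y; induction n; intros s x y H; simpl in H; [discriminate|].
  apply orb_true_iff in H; destruct H as [H|H].
  - exists 0%nat. split; [lia|]. split; [intros; lia|].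
    destruct s; simpl in *; apply Nat.ltb_lt in H; exact H.
  - apply andb_true_iff in H; destruct H as [He H]. apply Nat.eqb_eq in He.
    destruct (IHn _ _ _ H) as [j [Hj [Hi Hc]]].
    exists (S j). split; [lia|]. split.
    + intros i Hi'. destruct i; auto. specialize (Hi i ltac:(lia)). unfold shift in Hi. exact Hi.
    + rewrite Nat.even_succ, <- Nat.negb_even. unfold shift in Hc. simpl in Hc.
      destruct s, (Nat.even j); simpl in *; exact Hc.
Qed.

Lemma zsign j : ((-1) ^ (Z.of_nat j) = if Nat.even j then 1 else -1)%Z.
Proof.
  induction j; [reflexivity|].
  rewrite Nat2Z.inj_succ, Z.pow_succ_r by lia. rewrite IHj, Nat.even_succ, <- Nat.negb_even.
  destruct (Nat.even j); reflexivity.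
Qed.

Lemma lt_to_alt n x y : ltw true (pre n x) y = true -> alt_lt x y.
Proof.
  intro H. destruct (ltw_witness _ _ _ _ H) as [j [_ [Hi Hc]]].
  exists j. split; auto. rewrite zsign, Nat.even_succ, <- Nat.negb_even.
  destruct (Nat.even j); cbn [negb Bool.eqb] in *; lia.
Qed.

Lemma gt_to_alt n x y : ltw false (pre n x) y = true -> alt_lt y x.
Proof.
  intro H. destruct (ltw_witness _ _ _ _ H) as [j [_ [Hi Hc]]].
  exists j. split; [intros i Hi'; symmetry; auto|]. rewrite zsign, Nat.even_succ, <- Nat.negb_even.
  destruct (Nat.even j); cbn [negb Bool.eqb] in *; lia.
Qed.

Lemma alt_lt_asym x y : alt_lt x y -> alt_le y x -> False.
Proof.
  intros [j [Hj Hc]] [Heq|[k [Hk Hc']]].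
  - rewrite (Heq j) in Hc. rewrite Z.sub_diag, Z.mul_0_r in Hc. lia.
  - destruct (lt_eq_lt_dec j k) as [[Hl|He]|Hl].
    + rewrite (Hk j Hl) in Hc. rewrite Z.sub_diag, Z.mul_0_r in Hc. lia.
    + subst k. set (p := ((-1) ^ Z.of_nat (S j))%Z) in *.
      assert (p * (Z.of_nat (y j) - Z.of_nat (x j)) = - (p * (Z.of_nat (x j) - Z.of_nat (y j))))%Z by ring.
      lia.
    + rewrite (Hj k Hl) in Hc'. rewrite Z.sub_diag, Z.mul_0_r in Hc'. lia.
Qed.

Lemma alt_le_pre y z n : alt_le y z -> ltw true (pre n z) y = false.
Proof.
  intro H. destruct (ltw true (pre n z) y) eqn:E; auto.
  exfalso. apply (alt_lt_asym z y); auto. eapply lt_to_alt; eauto.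
Qed.

Fixpoint adm (d : word) (u : list nat) : bool :=
  match u with [] => true | c :: u' => adm d u' && negb (ltw true (c :: u') d) end.

Lemma adm_suffix d u v : adm d (u ++ v) = true -> adm d v = true.
Proof.
  induction u as [|c u IH]; simpl; auto. intro H. apply andb_true_iff in H. apply IH, H.
Qed.

Lemma adm_prefix d u v : adm d (u ++ v) = true -> adm d u = true.
Proof.
  induction u as [|c u IH]; simpl; auto. intro H. apply andb_true_iff in H. destruct H as [H1 H2].
  rewrite IH by auto. simpl andb. destruct (ltw true (c :: u) d) eqn:E.
  - apply (ltw_app _ _ v) in E. simpl in E, H2. rewrite E in H2. discriminate.
  - simpl in E. rewrite E. reflexivity.
Qed.

Lemma adm_head d u : adm d u = true -> ltw true u d = false.
Proof.
  destruct u as [|c u]; simpl; auto. intro H. apply andb_true_iff in H. destruct H as [_ H].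
  apply negb_true_iff in H. exact H.
Qed.

Lemma adm_skipn d w k : adm d w = true -> adm d (skipn k w) = true.
Proof.
  intro H. rewrite <- (firstn_skipn k w) in H. eapply adm_suffix; eauto.
Qed.

Lemma adm_pre_shift d j n : alt_lyndon d -> adm d (pre n (shift d j)) = true.
Proof.
  intros [_ HL]. revert j; induction n; intro j; auto.
  pose proof (alt_le_pre d (shift d j) (S n) (HL j)) as E.
  change (adm d (pre n (shift (shift d j) 1)) && negb (ltw true (pre (S n) (shift d j)) d) = true).
  rewrite E, shift_shift, IHn. reflexivity.
Qed.

Lemma list_pre w z : (forall i, (i < length w)%nat -> nth i w 0%nat = z i) -> w = pre (length w) z.
Proof.
  revert z; induction w as [|c w IH]; intros z H; simpl; auto.
  f_equal.
  - apply (H 0%nat); simpl; lia.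
  - apply IH. intros i Hi. unfold shift. apply (H (S i)). simpl; lia.
Qed.

Lemma factor_adm d n w : is_factor d n w -> adm d w = true.
Proof.
  intros [Hl [x [k [Hx Hw]]]].
  assert (G: forall w k', (forall i, (i < length w)%nat -> nth i w 0%nat = x (k' + i)%nat) -> adm d w = true).
  { clear Hw Hl. intro w0. induction w0 as [|c w0 IH]; intros k' H; auto.
    change (adm d w0 && negb (ltw true (c::w0) d) = true).
    rewrite (IH (S k')).
    - assert (E: c :: w0 = pre (length (c :: w0)) (shift x k')).
      { apply list_pre. intros i Hi. apply H. auto. }
      rewrite E. rewrite (alt_le_pre d (shift x k')); auto.
    - intros i Hi. replace (S k' + i)%nat with (k' + S i)%nat by lia. apply (H (S i)). simpl; lia. }
  apply (G w k). rewrite Hl. auto.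
Qed.

Fixpoint bsearch (d : word) (w : list nat) (j : nat) : nat :=
  match j with
  | O => O
  | S j' => if list_eq_dec Nat.eq_dec (skipn (length w - S j') w) (pre (S j') d)
            then S j' else bsearch d w j'
  end.

Lemma bsearch_le d w j : (bsearch d w j <= j)%nat.
Proof. induction j; simpl; auto. destruct list_eq_dec; lia. Qed.

Lemma bsearch_ok d w j : (j <= length w)%nat ->
  skipn (length w - bsearch d w j) w = pre (bsearch d w j) d.
Proof.
  induction j; intro Hj; simpl.
  - rewrite Nat.sub_0_r. apply skipn_all.
  - destruct list_eq_dec; auto. apply IHj; lia.
Qed.

Lemma bsearch_max d w j i : (bsearch d w j < i <= j)%nat ->
  skipn (length w - i) w <> pre i d.
Proof.
  induction j; intro Hi; simpl in *; [lia|].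
  destruct list_eq_dec as [E|E]; [lia|].
  destruct (Nat.eq_dec i (S j)); [subst; auto|]. apply IHj; lia.
Qed.

Lemma alt_le_ext x y y' : (forall i, y i = y' i) -> alt_le x y -> alt_le x y'.
Proof.
  intros E H. replace y' with y; auto. apply functional_extensionality; auto.
Qed.

Lemma adm_factor d w : alt_lyndon d -> adm d w = true -> is_factor d (length w) w.
Proof.
  intros Hd Hw. set (n := length w). set (J := bsearch d w n).
  assert (HJ : (J <= n)%nat) by apply bsearch_le.
  assert (HJok : skipn (n - J) w = pre J d) by (apply bsearch_ok; lia).
  set (x := fun i => if (i <? n)%nat then nth i w 0%nat else d (J + (i - n))%nat).
  split; auto. exists x, 0%nat. split.
  - intro k. destruct (le_lt_dec (n - J) k) as [Hk|Hk].
    + apply (alt_le_ext d (shift d (k - (n - J)))).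
      * intro i. unfold shift, x. destruct (Nat.ltb_spec (k + i) n).
        -- replace (k + i)%nat with ((n - J) + (k + i - (n - J)))%nat by lia.
           rewrite <- nth_skipn, HJok, pre_nth by lia. f_equal; lia.
        -- f_equal; lia.
      * apply (proj2 Hd).
    + right.
      set (u := skipn k w).
      assert (Hul : length u = (n - k)%nat) by (unfold u; rewrite length_skipn; auto).
      assert (Hu : u = pre (n - k) (shift x k)).
      { rewrite <- Hul. apply list_pre. intros i Hi. unfold u, shift, x.
        rewrite nth_skipn. destruct (Nat.ltb_spec (k + i) n); [f_equal; lia|lia]. }
      assert (Ha : adm d u = true) by (apply adm_skipn; auto).
      pose proof (adm_head _ _ Ha) as H1.
      destruct (ltw_trich true u d) as [H|[H|H]].
      * rewrite H1 in H; discriminate.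
      * rewrite Hu in H. eapply gt_to_alt; eauto.
      * exfalso. rewrite Hul in H. apply (bsearch_max d w n (n - k)); [fold J; lia|].
        fold n. replace (n - (n - k))%nat with k by lia. exact H.
  - intros i Hi. unfold x. simpl. destruct (Nat.ltb_spec i n); auto; lia.
Qed.

Lemma words_S n m : words (S n) m = flat_map (fun a => map (cons a) (words n m)) (seq 0 (S m)).
Proof. reflexivity. Qed.

Lemma words_len n m w : In w (words n m) -> length w = n.
Proof.
  revert w; induction n; intros w H.
  - simpl in H. destruct H as [H|[]]; subst; reflexivity.
  - rewrite words_S in H. apply in_flat_map in H. destruct H as [c [_ H]]. apply in_map_iff in H.
    destruct H as [u [E H]]. subst. simpl. f_equal; auto.
Qed.

Lemma words_in n m w : length w = n -> (forall c, In c w -> (c <= m)%nat) -> In w (words n m).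
Proof.
  revert w; induction n; intros w Hl Hc.
  - destruct w; [left; auto|discriminate].
  - destruct w as [|c w]; [discriminate|]. rewrite words_S. apply in_flat_map.
    exists c. split.
    + apply in_seq. specialize (Hc c (or_introl eq_refl)). lia.
    + apply in_map. apply IHn; [simpl in Hl; lia|]. intros c' H'. apply Hc. right; auto.
Qed.

Lemma NoDup_flat_map {A B} (f : A -> list B) l :
  NoDup l -> (forall x, NoDup (f x)) ->
  (forall x y z, In x l -> In y l -> In z (f x) -> In z (f y) -> x = y) ->
  NoDup (flat_map f l).
Proof.
  induction l as [|x l IH]; intros Hl Hf Hd; simpl; [constructor|].
  inversion Hl; subst. apply NoDup_app; auto.
  - apply IH; auto. intros. eapply Hd; eauto; right; auto.
  - intros z Hz Hz'. apply in_flat_map in Hz'. destruct Hz' as [y [Hy Hz']].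
    assert (x = y) by (eapply Hd; eauto; [left; auto|right; auto]). subst. contradiction.
Qed.

Lemma words_nodup n m : NoDup (words n m).
Proof.
  induction n.
  - simpl. constructor; [intros []|constructor].
  - rewrite words_S. apply NoDup_flat_map.
    + apply seq_NoDup.
    + intro c. apply NoDup_map_NoDup_ForallPairs; auto.
      intros u v _ _ E. injection E; auto.
    + intros x y z _ _ Hx Hy. apply in_map_iff in Hx, Hy.
      destruct Hx as [u [Eu _]], Hy as [v [Ev _]]. subst. injection Ev; auto.
Qed.

Lemma len_filter_flat_map {A B} (P : B -> bool) (f : A -> list B) l :
  length (filter P (flat_map f l)) = list_sum (map (fun x => length (filter P (f x))) l).
Proof.
  induction l; simpl; auto. rewrite filter_app, length_app, IHl. reflexivity.
Qed.

Lemma len_filter_map {A B} (P : B -> bool) (f : A -> B) l :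
  length (filter P (map f l)) = length (filter (fun x => P (f x)) l).
Proof. induction l; simpl; auto. destruct (P (f a)); simpl; auto. Qed.

Lemma len_filter_part {A} (P Q : A -> bool) l :
  length (filter P l) = (length (filter (fun x => P x && Q x) l) + length (filter (fun x => P x && negb (Q x)) l))%nat.
Proof.
  induction l; simpl; auto. destruct (P a), (Q a); simpl; rewrite IHl; lia.
Qed.

Lemma len_filter_ext {A} (P Q : A -> bool) l :
  (forall x, In x l -> P x = Q x) -> length (filter P l) = length (filter Q l).
Proof. intro H. rewrite (filter_ext_in P Q l H). reflexivity. Qed.

Lemma len_filter_le {A} (P Q : A -> bool) l :
  (forall x, In x l -> P x = true -> Q x = true) -> (length (filter P l) <= length (filter Q l))%nat.
Proof.
  induction l; simpl; intros H; auto.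
  destruct (P a) eqn:E.
  - rewrite (H a (or_introl eq_refl) E). simpl. apply le_n_S. apply IHl. intros; auto.
  - destruct (Q a); simpl; [apply le_S|]; apply IHl; intros; auto.
Qed.

Lemma len_filter_unique {A} (eqd : forall x y : A, {x = y} + {x <> y}) (P : A -> bool) l p :
  NoDup l -> In p l -> P p = true ->
  length (filter (fun x => P x && (if eqd x p then true else false)) l) = 1%nat.
Proof.
  induction l as [|x l IH]; intros Hn Hi Hp; [destruct Hi|].
  inversion Hn; subst. simpl. destruct (eqd x p).
  - subst. rewrite Hp. simpl. f_equal.
    assert (G: forall l, ~ In p l -> length (filter (fun x => P x && (if eqd x p then true else false)) l) = 0%nat).
    { clear. induction l as [|y l IH]; intro H; simpl; auto. destruct (eqd y p).
      - subst. exfalso; apply H; left; auto.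
      - rewrite andb_false_r. apply IH. intro; apply H; right; auto. }
    apply G; auto.
  - rewrite andb_false_r. apply IH; auto. destruct Hi; [congruence|auto].
Qed.

Lemma list_sum_map_ext {A} (f g : A -> nat) l : (forall x, In x l -> f x = g x) ->
  list_sum (map f l) = list_sum (map g l).
Proof. intro H. rewrite (map_ext_in f g l H). reflexivity. Qed.

Lemma sum_seq_shift (g : nat -> nat) s k :
  list_sum (map g (seq s k)) = list_sum (map (fun c => g (s + c)%nat) (seq 0 k)).
Proof.
  induction k; [reflexivity|]. rewrite !seq_S, !map_app, !list_sum_app, IHk. simpl. reflexivity.
Qed.

Lemma sum_seq_const (g : nat -> nat) n k : (forall c, (c < n)%nat -> g c = k) ->
  list_sum (map g (seq 0 n)) = (n * k)%nat.
Proof.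
  intro H. rewrite (list_sum_map_ext g (fun _ => k)).
  - clear H. induction n; [reflexivity|]. rewrite seq_S, map_app, list_sum_app, IHn. simpl. lia.
  - intros x Hx. apply in_seq in Hx. apply H. lia.
Qed.

Lemma sum_seq_S (g : nat -> nat) n :
  list_sum (map g (seq 0 (S n))) = (list_sum (map g (seq 0 n)) + g n)%nat.
Proof. rewrite seq_S, map_app, list_sum_app. simpl. lia. Qed.

Lemma sum_seq_split (g : nat -> nat) n e : (e < n)%nat ->
  list_sum (map g (seq 0 n)) =
  (list_sum (map g (seq 0 e)) + g e + list_sum (map (fun c => g (S e + c)%nat) (seq 0 (n - S e))))%nat.
Proof.
  intro H. replace n with (S e + (n - S e))%nat at 1 by lia.
  rewrite seq_app, map_app, list_sum_app, sum_seq_S. rewrite Nat.add_0_l.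
  rewrite (sum_seq_shift g (S e)). reflexivity.
Qed.

Definition cnt (d : word) (m : nat) (P : list nat -> bool) : nat :=
  length (filter P (words m (d 0%nat))).
Definition hh d m := cnt d m (adm d).
Definition Lc d y m := cnt d m (fun v => adm d v && ltw true v y).
Definition Gc d y m := cnt d m (fun v => adm d v && ltw false v y).

Lemma cnt_S d m P : cnt d (S m) P =
  list_sum (map (fun c => cnt d m (fun u => P (c :: u))) (seq 0 (S (d 0%nat)))).
Proof.
  unfold cnt. rewrite words_S, len_filter_flat_map. f_equal. apply map_ext. intro c.
  apply len_filter_map.
Qed.

Lemma cnt_ext d m P Q : (forall u, length u = m -> P u = Q u) -> cnt d m P = cnt d m Q.
Proof. intro H. unfold cnt. apply len_filter_ext. intros x Hx. apply H. eapply words_len; eauto. Qed.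

Lemma cnt_false d m P : (forall u, length u = m -> P u = false) -> cnt d m P = 0%nat.
Proof.
  intro H. rewrite (cnt_ext d m P (fun _ => false)) by auto. unfold cnt.
  induction (words m (d 0%nat)); simpl; auto.
Qed.

Lemma cnt_part d m P Q : cnt d m P = (cnt d m (fun x => P x && Q x) + cnt d m (fun x => P x && negb (Q x)))%nat.
Proof. apply len_filter_part. Qed.

Lemma factor_count_eq d m : alt_lyndon d -> factor_count d m = hh d m.
Proof.
  intro Hd. unfold factor_count, hh, cnt. apply len_filter_ext. intros w Hw.
  pose proof (words_len _ _ _ Hw) as Hl.
  destruct (excluded_middle_informative (is_factor d m w)) as [H|H].
  - symmetry. eapply factor_adm; eauto.
  - destruct (adm d w) eqn:E; auto. exfalso. apply H. rewrite <- Hl. apply adm_factor; auto.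
Qed.

Lemma in_pre c n z : In c (pre n z) -> exists i, c = z i.
Proof.
  revert z; induction n; intros z H; simpl in H; [destruct H|].
  destruct H as [H|H]; [exists 0%nat; auto|]. destruct (IHn _ H) as [i Hi].
  exists (S i). rewrite Hi. unfold shift. f_equal.
Qed.

Lemma pre_in_words d j m : alt_lyndon d -> In (pre m (shift d j)) (words m (d 0%nat)).
Proof.
  intro Hd. apply words_in; [apply pre_length|]. intros c Hc. destruct (in_pre _ _ _ Hc) as [i Hi].
  subst. unfold shift. apply (proj1 Hd).
Qed.

Lemma tri_count d j m : alt_lyndon d ->
  hh d m = (Lc d (shift d j) m + Gc d (shift d j) m + 1)%nat.
Proof.
  intro Hd. set (y := shift d j). unfold hh.
  rewrite (cnt_part d m (adm d) (fun v => ltw true v y)).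
  rewrite (cnt_part d m (fun x => adm d x && negb (ltw true x y)) (fun v => ltw false v y)).
  rewrite (cnt_ext d m (fun x => adm d x && negb (ltw true x y) && ltw false x y)
                       (fun v => adm d v && ltw false v y)).
  2:{ intros u _. destruct (ltw false u y) eqn:E.
      - apply ltw_excl in E. simpl in E. rewrite E. destruct (adm d u); auto.
      - rewrite !andb_false_r. auto. }
  set (p := pre m y).
  rewrite (cnt_ext d m (fun x => adm d x && negb (ltw true x y) && negb (ltw false x y))
                       (fun v => adm d v && (if list_eq_dec Nat.eq_dec v p then true else false))).
  2:{ intros u Hu. destruct (list_eq_dec Nat.eq_dec u p) as [E|E].
      - subst u. unfold p. rewrite !ltw_pre_self. simpl. rewrite !andb_true_r. auto.
      - destruct (ltw_trich true u y) as [H|[H|H]].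
        + rewrite H. rewrite !andb_false_r. simpl. auto.
        + simpl in H. rewrite H. rewrite !andb_false_r. auto.
        + exfalso. apply E. rewrite H, Hu. reflexivity. }
  unfold cnt at 3. rewrite (len_filter_unique (list_eq_dec Nat.eq_dec)).
  - unfold Lc, Gc. lia.
  - apply words_nodup.
  - apply pre_in_words; auto.
  - apply adm_pre_shift; auto.
Qed.

Lemma hh0 d : hh d 0 = 1%nat.
Proof. reflexivity. Qed.

Lemma Lc0 d y : Lc d y 0 = 0%nat.
Proof. reflexivity. Qed.

Lemma gA d m : alt_lyndon d ->
  cnt d m (fun u => adm d u && negb (ltw false u (shift d 1))) = (Lc d (shift d 1) m + 1)%nat.
Proof.
  intro Hd. pose proof (tri_count d 1 m Hd) as T. unfold hh in T.
  rewrite (cnt_part d m (adm d) (fun v => ltw false v (shift d 1))) in T.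
  unfold Gc in T. lia.
Qed.

Lemma R2 d m : alt_lyndon d ->
  hh d (S m) = (d 0%nat * hh d m + Lc d (shift d 1) m + 1)%nat.
Proof.
  intro Hd. unfold hh at 1. rewrite cnt_S, sum_seq_S.
  rewrite (sum_seq_const _ (d 0%nat) (hh d m)).
  - rewrite <- Nat.add_assoc, <- (gA d m Hd). f_equal. apply cnt_ext. intros u _. simpl.
    rewrite Nat.ltb_irrefl, Nat.eqb_refl. reflexivity.
  - intros c Hc. unfold hh. apply cnt_ext. intros u _. simpl.
    replace (d 0%nat <? c) with false by (symmetry; apply Nat.ltb_ge; lia).
    replace (c =? d 0%nat) with false by (symmetry; apply Nat.eqb_neq; lia).
    simpl. rewrite andb_true_r. reflexivity.
Qed.

Lemma shift_j0 (z : word) j : shift z j 0%nat = z j.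
Proof. unfold shift. rewrite Nat.add_0_r. reflexivity. Qed.

Lemma R3 d j m : alt_lyndon d ->
  (Lc d (shift d j) (S m) + Lc d (shift d (S j)) m =
   (d 0%nat - d j) * hh d m + Lc d (shift d 1) m)%nat.
Proof.
  intro Hd. set (a := d 0%nat). set (e := d j).
  assert (Hea : (e <= a)%nat) by apply (proj1 Hd).
  assert (Hy : shift (shift d j) 1 = shift d (S j)) by (rewrite shift_shift; f_equal; lia).
  unfold Lc at 1. rewrite cnt_S, sum_seq_S.
  pose proof (tri_count d (S j) m Hd) as T1.
  pose proof (tri_count d 1 m Hd) as T2.
  destruct (Nat.eq_dec e a) as [Eq|Ne].
  -
    rewrite (sum_seq_const _ a 0%nat).
    2:{ intros c Hc. apply cnt_false. intros u _. cbn [adm ltw negb]. rewrite ?shift_j0.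
        replace (d j <? c) with false by (symmetry; apply Nat.ltb_ge; fold e; lia).
        replace (c =? d j) with false by (symmetry; apply Nat.eqb_neq; fold e; lia).
        rewrite !andb_false_r. reflexivity. }
    assert (Htr : forall u, ltw false u (shift d 1) = true -> ltw false u (shift d (S j)) = true).
    { intros u Hu. apply (ltw_trans false u (shift d (S j)) (shift d 1)); auto.
      intro n. pose proof (alt_le_pre d (shift d j) (S n) (proj2 Hd j)) as H.
      simpl in H. unfold shift at 1 2 in H. simpl in H. rewrite Nat.add_0_r in H.
      fold e in H. rewrite Eq in H. fold a in H. rewrite Nat.ltb_irrefl, Nat.eqb_refl in H.
      simpl in H. rewrite shift_shift in H. replace (j + 1)%nat with (S j) in H by lia. exact H. }
    rewrite (cnt_ext d m _ (fun u => adm d u && ltw false u (shift d (S j)) && negb (ltw false u (shift d 1)))).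
    2:{ intros u _. cbn [adm ltw negb]. rewrite ?shift_j0. fold a. fold e. rewrite Eq. rewrite Nat.ltb_irrefl, Nat.eqb_refl.
        simpl. rewrite Hy. destruct (adm d u), (ltw false u (shift d 1)) eqn:E1,
          (ltw false u (shift d (S j))) eqn:E2; auto; try (rewrite (Htr u E1) in E2; discriminate). }
    pose proof (cnt_part d m (fun u => adm d u && ltw false u (shift d (S j))) (fun u => ltw false u (shift d 1))) as P. cbv beta in P.
    rewrite (cnt_ext d m (fun x => adm d x && ltw false x (shift d (S j)) && ltw false x (shift d 1))
                         (fun x => adm d x && ltw false x (shift d 1))) in P.
    2:{ intros u _. destruct (ltw false u (shift d 1)) eqn:E1.
        - rewrite (Htr u E1). destruct (adm d u); auto.
        - rewrite !andb_false_r. auto. }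
    fold (Gc d (shift d (S j)) m) in P. fold (Gc d (shift d 1) m) in P.
    replace (a - e)%nat with 0%nat by lia. lia.
  -
    assert (Hlt : (e < a)%nat) by lia.
    rewrite (sum_seq_split _ a e Hlt).
    rewrite (sum_seq_const _ e 0%nat).
    2:{ intros c Hc. apply cnt_false. intros u _. cbn [adm ltw negb]. rewrite ?shift_j0.
        replace (d j <? c) with false by (symmetry; apply Nat.ltb_ge; fold e; lia).
        replace (c =? d j) with false by (symmetry; apply Nat.eqb_neq; fold e; lia).
        rewrite !andb_false_r. reflexivity. }
    rewrite (sum_seq_const _ (a - S e) (hh d m)).
    2:{ intros c Hc. unfold hh. apply cnt_ext. intros u _. cbn [adm ltw negb]. rewrite ?shift_j0. fold a e.
        replace (a <? S e + c) with false by (symmetry; apply Nat.ltb_ge; lia).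
        replace (S e + c =? a) with false by (symmetry; apply Nat.eqb_neq; lia).
        replace (e <? S e + c) with true by (symmetry; apply Nat.ltb_lt; lia).
        destruct (adm d u); reflexivity. }
    rewrite (cnt_ext d m (fun u => adm d (e :: u) && ltw true (e :: u) (shift d j)) (fun u => adm d u && ltw false u (shift d (S j)))).
    2:{ intros u _. cbn [adm ltw negb]. rewrite ?shift_j0. fold a e.
        replace (a <? e) with false by (symmetry; apply Nat.ltb_ge; lia).
        replace (e =? a) with false by (symmetry; apply Nat.eqb_neq; lia).
        rewrite Nat.ltb_irrefl, Nat.eqb_refl, Hy. simpl. rewrite andb_true_r. reflexivity. }
    rewrite (cnt_ext d m (fun u => adm d (d 0%nat :: u) && ltw true (d 0%nat :: u) (shift d j)) (fun u => adm d u && negb (ltw false u (shift d 1)))).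
    2:{ intros u _. cbn [adm ltw negb]. rewrite ?shift_j0. fold a e. rewrite Nat.ltb_irrefl, Nat.eqb_refl.
        replace (e <? a) with true by (symmetry; apply Nat.ltb_lt; lia). simpl.
        rewrite andb_true_r. reflexivity. }
    rewrite (gA d m Hd). fold (Gc d (shift d (S j)) m).
    replace (a - e)%nat with (S (a - S e)) by lia. simpl. lia.
Qed.

Lemma flat_map_map {A B C} (f : B -> list C) (g : A -> B) l :
  flat_map f (map g l) = flat_map (fun x => f (g x)) l.
Proof. induction l; simpl; auto. rewrite IHl; auto. Qed.

Lemma flat_map_flat_map {A B C} (f : B -> list C) (g : A -> list B) l :
  flat_map f (flat_map g l) = flat_map (fun x => flat_map f (g x)) l.
Proof. induction l; simpl; auto. rewrite flat_map_app, IHl; auto. Qed.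

Lemma map_flat_map {A B C} (f : B -> C) (g : A -> list B) l :
  map f (flat_map g l) = flat_map (fun x => map f (g x)) l.
Proof. induction l; simpl; auto. rewrite map_app, IHl; auto. Qed.

Lemma words_app m n a : words (m + n) a =
  flat_map (fun u => map (fun v => u ++ v) (words n a)) (words m a).
Proof.
  induction m.
  - simpl. rewrite app_nil_r, map_id. reflexivity.
  - simpl (S m + n)%nat. rewrite !words_S, IHm, flat_map_flat_map. apply flat_map_ext. intro c.
    rewrite flat_map_map, map_flat_map. apply flat_map_ext. intro u. rewrite map_map. reflexivity.
Qed.

Lemma list_sum_le {A} (f g : A -> nat) l : (forall x, In x l -> (f x <= g x)%nat) ->
  (list_sum (map f l) <= list_sum (map g l))%nat.
Proof.
  induction l; simpl; intros H; auto. specialize (IHl (fun x Hx => H x (or_intror Hx))).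
  specialize (H a (or_introl eq_refl)). lia.
Qed.

Lemma list_sum_if {A} (P : A -> bool) k l :
  list_sum (map (fun u => if P u then k else 0%nat) l) = (length (filter P l) * k)%nat.
Proof. induction l; simpl; auto. destruct (P a); simpl; lia. Qed.

Lemma hh_submult d m n : (hh d (m + n) <= hh d m * hh d n)%nat.
Proof.
  unfold hh, cnt. rewrite words_app, len_filter_flat_map.
  rewrite <- list_sum_if. apply list_sum_le. intros u Hu.
  rewrite len_filter_map. destruct (adm d u) eqn:E.
  - apply len_filter_le. intros v _ H. eapply adm_suffix; eauto.
  - rewrite (len_filter_ext _ (fun _ => false)).
    + induction (words n (d 0%nat)); simpl; auto.
    + intros v _. destruct (adm d (u ++ v)) eqn:E2; auto.
      apply adm_prefix in E2. congruence.
Qed.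

Lemma hh_pos d m : alt_lyndon d -> (1 <= hh d m)%nat.
Proof.
  intro Hd. unfold hh, cnt.
  assert (H: In (pre m (shift d 0)) (filter (adm d) (words m (d 0%nat)))).
  { apply filter_In. split; [apply pre_in_words; auto|apply adm_pre_shift; auto]. }
  destruct (filter (adm d) (words m (d 0%nat))); [destruct H|simpl; lia].
Qed.

Open Scope R_scope.

Fixpoint sm (f : nat -> R) (n : nat) : R :=
  match n with O => 0 | S n => sm f n + f n end.

Lemma sm_first f n : sm f (S n) = f 0%nat + sm (fun i => f (S i)) n.
Proof. induction n; simpl in *; [lra|]. rewrite IHn. lra. Qed.

Lemma sm_ext f g n : (forall i, (i < n)%nat -> f i = g i) -> sm f n = sm g n.
Proof. induction n; intro H; simpl; auto. rewrite IHn, H; auto. Qed.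

Lemma sm_opp f n : sm (fun i => - f i) n = - sm f n.
Proof. induction n; simpl; [lra|]. rewrite IHn; lra. Qed.

Lemma sm_minus f g n : sm (fun i => f i - g i) n = sm f n - sm g n.
Proof. induction n; simpl; [lra|]. rewrite IHn; lra. Qed.

Lemma sm_plus f g n : sm (fun i => f i + g i) n = sm f n + sm g n.
Proof. induction n; simpl; [lra|]. rewrite IHn; lra. Qed.

Lemma sum_f_R0_sm f n : sum_f_R0 f n = sm f (S n).
Proof. induction n; simpl in *; [lra|]. rewrite IHn. reflexivity. Qed.

Section Alg.
Variable d : word.
Hypothesis Hd : alt_lyndon d.

Definition hr m := INR (hh d m).
Definition lr j m := INR (Lc d (shift d j) m).
Definition dr i := INR (d i).

Lemma R2r m : hr (S m) = dr 0 * hr m + lr 1 m + 1.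
Proof. unfold hr, lr, dr. rewrite R2 by auto. rewrite !plus_INR, mult_INR. simpl. lra. Qed.

Lemma R3r j m : lr j (S m) = (dr 0 - dr j) * hr m + lr 1 m - lr (S j) m.
Proof.
  pose proof (R3 d j m Hd) as H. apply (f_equal INR) in H.
  rewrite !plus_INR, mult_INR, minus_INR in H by apply (proj1 Hd).
  unfold hr, lr, dr. lra.
Qed.

Lemma closed m : forall j, lr j m =
  sm (fun i => (-1)^i * (hr (m - i) - dr (j + i) * hr (m - 1 - i) - 1)) m.
Proof.
  induction m; intro j.
  - unfold lr. rewrite Lc0. simpl. reflexivity.
  - rewrite R3r, sm_first.
    rewrite (sm_ext _ (fun i => - ((-1)^i * (hr (m - i) - dr (S j + i) * hr (m - 1 - i) - 1)))).
    + rewrite sm_opp, <- IHm. simpl. rewrite Nat.sub_0_r, Nat.add_0_r. rewrite Nat.sub_0_r, R2r. lra.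
    + intros i Hi. simpl. replace (m - 0 - S i)%nat with (m - 1 - i)%nat by lia.
      replace (S j + i)%nat with (S (j + i)) by lia. replace (j + S i)%nat with (S (j + i)) by lia. lra.
Qed.

Lemma Ef_zero m : sm (fun i => (-1)^i * (hr (m - i) - dr i * hr (m - 1 - i) - 1)) m = 0.
Proof.
  destruct m; [reflexivity|].
  rewrite sm_first.
  rewrite (sm_ext _ (fun i => - ((-1)^i * (hr (m - i) - dr (1 + i) * hr (m - 1 - i) - 1)))).
  - rewrite sm_opp, <- closed. simpl. rewrite !Nat.sub_0_r. rewrite R2r. lra.
  - intros i Hi. simpl. rewrite !Nat.sub_0_r. replace (m - S i)%nat with (m - 1 - i)%nat by lia. lra.
Qed.

Definition ddr k := match k with O => 0 | S k' => dr k' end.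
Definition q n := match n with O => 1 | S k => (-1)^(S k) * (dr k - ddr k) end.

Definition Af m := sm (fun i => (-1)^i * (hr (m - i) - 1)) m.
Definition Bf m := sm (fun i => (-1)^i * dr i * hr (m - 1 - i)) m.

Lemma Ef_AB m : Af m - Bf m = 0.
Proof.
  rewrite <- (Ef_zero m). unfold Af, Bf. rewrite <- sm_minus. apply sm_ext. intros. lra.
Qed.

Lemma Af_S n : Af (S n) = hr (S n) - 1 - Af n.
Proof.
  unfold Af. rewrite sm_first. simpl. rewrite ?Nat.sub_0_r.
  rewrite (sm_ext _ (fun i => - ((-1)^i * (hr (n - i) - 1)))).
  - rewrite sm_opp. lra.
  - intros. simpl. lra.
Qed.

Lemma hr0 : hr 0 = 1.
Proof. unfold hr. rewrite hh0. reflexivity. Qed.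

Lemma conv n : sum_f_R0 (fun k => q k * hr (n - k)) n = 1.
Proof.
  rewrite sum_f_R0_sm. destruct n.
  - simpl. rewrite hr0. lra.
  - rewrite sm_first.
    rewrite (sm_ext _ (fun k => (-1)^(S k) * dr k * hr (n - k) + (- ((-1)^(S k) * ddr k * hr (n - k))))).
    2:{ intros i Hi. simpl q. simpl (S n - S i)%nat. simpl. ring. }
    rewrite sm_plus.
    assert (E1 : sm (fun k => (-1)^(S k) * dr k * hr (n - k)) (S n) = - Bf (S n)).
    { unfold Bf. rewrite <- sm_opp. apply sm_ext. intros i Hi. simpl (S n - 1 - i)%nat.
      rewrite Nat.sub_0_r. simpl. lra. }
    assert (E2 : sm (fun k => - ((-1)^(S k) * ddr k * hr (n - k))) (S n) = - Bf n).
    { rewrite sm_first. simpl ddr. unfold Bf. rewrite <- sm_opp.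
      rewrite (sm_ext (fun i => - ((-1) ^ S (S i) * dr i * hr (n - S i))) (fun i => - ((-1)^i * dr i * hr (n - 1 - i)))).
      - lra.
      - intros i Hi. replace (n - S i)%nat with (n - 1 - i)%nat by lia. simpl. lra. }
    rewrite E1, E2. simpl (q 0). simpl (S n - 0)%nat.
    pose proof (Ef_AB (S n)) as H1. pose proof (Ef_AB n) as H2. pose proof (Af_S n) as H3.
    lra.
Qed.

End Alg.

From Coquelicot Require Import Coquelicot.
Import Defs.
Open Scope R_scope.

Lemma ln_pos_gt1 b : ln b > 0 -> b > 1.
Proof.
  intro H. destruct (Rlt_le_dec 0 b) as [Hb|Hb].
  - rewrite <- (exp_ln b Hb). rewrite <- exp_0. apply exp_increasing. lra.
  - exfalso. unfold ln in H. destruct (Rlt_dec 0 b); lra.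
Qed.

Lemma pow_submult (h : nat -> R) (Hpos : forall n, 1 <= h n)
  (Hsub : forall m n, h (m + n)%nat <= h m * h n) :
  forall k n, h (S k * n)%nat <= h n ^ (S k).
Proof.
  induction k; intro n.
  - simpl. rewrite Nat.add_0_r. lra.
  - replace (S (S k) * n)%nat with (n + S k * n)%nat by lia.
    eapply Rle_trans; [apply Hsub|]. simpl (h n ^ S (S k)).
    apply Rmult_le_compat_l; [specialize (Hpos n); lra|]. apply IHk.
Qed.

Lemma fekete (h : nat -> R) (L : R) (Hpos : forall n, 1 <= h n)
  (Hsub : forall m n, h (m + n)%nat <= h m * h n)
  (Hcv : Un_cv (fun n => ln (h (S n)) / INR (S n)) L) :
  forall n, (0 < n)%nat -> L <= ln (h n) / INR n.
Proof.
  intros n Hn. destruct (Rle_dec L (ln (h n) / INR n)) as [H|H]; auto. exfalso.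
  apply Rnot_le_lt in H. set (c := ln (h n) / INR n) in *.
  destruct (Hcv (L - c)) as [N HN]; [lra|].
  set (m := (S N * n - 1)%nat).
  assert (Hm : (m >= N)%nat) by (unfold m; nia).
  specialize (HN m Hm). unfold R_dist in HN.
  assert (HSm : S m = (S N * n)%nat) by (unfold m; nia).
  rewrite HSm in HN.
  assert (Hle : ln (h (S N * n)%nat) / INR (S N * n) <= c).
  { unfold c. rewrite mult_INR.
    assert (Hl : ln (h (S N * n)%nat) <= INR (S N) * ln (h n)).
    { rewrite <- ln_pow by (specialize (Hpos n); lra). apply ln_le.
      - specialize (Hpos (S N * n)%nat); lra.
      - apply pow_submult; auto. }
    assert (0 < INR (S N)) by (apply lt_0_INR; lia).
    assert (0 < INR n) by (apply lt_0_INR; lia).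
    apply (Rmult_le_reg_r (INR (S N) * INR n)); [nra|].
    field_simplify; try lra. }
  apply Rabs_def2 in HN. lra.
Qed.

Lemma fekete_pow (h : nat -> R) (b : R) (Hb : 0 < b) (Hpos : forall n, 1 <= h n)
  (Hsub : forall m n, h (m + n)%nat <= h m * h n)
  (Hcv : Un_cv (fun n => ln (h (S n)) / INR (S n)) (ln b)) (H0 : h 0%nat = 1) :
  forall n, b ^ n <= h n.
Proof.
  intro n. destruct n; [simpl; lra|].
  pose proof (fekete h (ln b) Hpos Hsub Hcv (S n) ltac:(lia)) as H.
  assert (0 < INR (S n)) by (apply lt_0_INR; lia).
  assert (H2 : ln (b ^ S n) <= ln (h (S n))).
  { rewrite ln_pow by auto. apply (Rmult_le_compat_r (INR (S n))) in H; [|lra].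
    unfold Rdiv in H. rewrite Rmult_assoc, Rinv_l in H by lra. lra. }
  destruct (Rle_dec (b ^ S n) (h (S n))) as [|Hn]; auto. exfalso.
  apply Rnot_le_lt in Hn. pose proof (Hpos (S n)).
  apply ln_increasing in Hn; lra.
Qed.

Lemma exp_INR_mult k c : exp (INR k * c) = (exp c) ^ k.
Proof.
  induction k; [simpl; rewrite Rmult_0_l, exp_0; reflexivity|].
  rewrite S_INR, Rmult_plus_distr_r, Rmult_1_l, exp_plus, IHk. simpl. ring.
Qed.

Lemma ex_series_R_le (a b : nat -> R) : (forall n, Rabs (a n) <= b n) -> ex_series b -> ex_series a.
Proof. intros H Hb. apply (ex_series_le a b); auto. Qed.

Lemma growth_upper (h : nat -> R) b z (Hb : 0 < b) (Hpos : forall n, 1 <= h n)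
  (Hcv : Un_cv (fun n => ln (h (S n)) / INR (S n)) (ln b)) (Hz : 0 < z) (Hzb : z * b < 1) :
  ex_series (fun n => h n * z ^ n).
Proof.
  assert (Hl : ln (z * b) < 0).
  { rewrite <- ln_1. apply ln_increasing; nra. }
  set (eps := - ln (z * b) / 2).
  destruct (Hcv eps) as [N HN]; [unfold eps; lra|].
  set (rho := exp (ln (z * b) + eps)).
  assert (Hrho : 0 < rho < 1).
  { unfold rho. split; [apply exp_pos|]. rewrite <- exp_0. apply exp_increasing. unfold eps. lra. }
  apply (ex_series_incr_n _ (S N)).
  apply (ex_series_R_le _ (fun k => rho ^ (S N + k))).
  - intro k. set (n := (N + k)%nat). replace (S N + k)%nat with (S n) by (unfold n; lia).
    specialize (HN n ltac:(unfold n; lia)). unfold R_dist in HN. apply Rabs_def2 in HN.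
    destruct HN as [HN _].
    assert (0 < INR (S n)) by (apply lt_0_INR; lia).
    assert (Hln : ln (h (S n)) < INR (S n) * (ln b + eps)).
    { apply (Rmult_lt_compat_r (INR (S n))) in HN; [|lra].
      assert (E: ln (h (S n)) = (ln (h (S n)) / INR (S n)) * INR (S n)) by (field; lra). rewrite E. nra. }
    assert (Hhp : 0 < h (S n)) by (specialize (Hpos (S n)); lra).
    rewrite Rabs_pos_eq by (apply Rmult_le_pos; [lra|apply pow_le; lra]).
    rewrite <- (exp_ln (h (S n))) by auto. rewrite <- (exp_ln z) by auto.
    rewrite <- exp_INR_mult, <- exp_plus. unfold rho. rewrite <- exp_INR_mult.
    rewrite ln_mult by lra. apply Rlt_le, exp_increasing. nra.
  - apply (ex_series_incr_n (fun k => rho ^ k) (S N)). apply ex_series_geom.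
    rewrite Rabs_pos_eq; lra.
Qed.

Lemma is_series_R_decr (t : nat -> R) l :
  is_series (fun k => t (S k)) (l - t 0%nat) -> is_series t l.
Proof.
  intro H. apply is_series_decr_1. replace (plus l (opp (t 0%nat))) with (l - t 0%nat); auto.
Qed.

Lemma is_series_R_scal (c : R) (a : nat -> R) l : is_series a l -> is_series (fun n => c * a n) (c * l).
Proof. intro H. apply (is_series_scal c a l H). Qed.

Lemma is_series_R_plus (a b : nat -> R) la lb : is_series a la -> is_series b lb ->
  is_series (fun n => a n + b n) (la + lb).
Proof. intros Ha Hb. apply (is_series_plus a b la lb Ha Hb). Qed.

Lemma qlink d z s0 : is_series (fun j => dr d j * (-z)^(S j)) s0 ->
  is_series (fun n => q d n * z^n) (1 + (1+z)*s0).
Proof.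
  intro HS. set (a := fun j => dr d j * (-z)^(S j)) in *.
  set (c := fun k => - ((-1)^(S k) * ddr d k * z^(S k))).
  assert (Hc : is_series c (z * s0)).
  { apply is_series_R_decr. unfold c at 2. simpl ddr. rewrite Rmult_0_r, Rmult_0_l, Ropp_0, Rminus_0_r.
    apply (is_series_ext (fun k => z * a k)).
    - intro k. unfold c, a. simpl ddr. replace (-z) with ((-1)*z) by ring. rewrite Rpow_mult_distr. simpl. ring.
    - apply is_series_R_scal; auto. }
  apply is_series_R_decr. simpl (q d 0). rewrite pow_O, Rmult_1_l.
  replace (1 + (1 + z) * s0 - 1) with (s0 + z * s0) by ring.
  apply (is_series_ext (fun k => a k + c k)).
  - intro k. unfold a, c. simpl q. replace (-z) with ((-1)*z) by ring. rewrite Rpow_mult_distr. simpl. ring.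
  - apply is_series_R_plus; auto.
Qed.

Lemma q_bound d n : alt_lyndon d -> Rabs (q d n) <= dr d 0 + 1.
Proof.
  intro Hd. assert (Hb : forall k, 0 <= dr d k <= dr d 0).
  { intro k. unfold dr. split; [apply pos_INR|apply le_INR, (proj1 Hd)]. }
  destruct n as [|k].
  - simpl. rewrite Rabs_R1. pose proof (Hb 0%nat). lra.
  - simpl q. rewrite Rabs_mult. replace (Rabs (-1 * (-1) ^ k)) with 1 by (rewrite Rabs_mult, pow_1_abs, Rabs_left by lra; lra). rewrite Rmult_1_l.
    assert (0 <= ddr d k <= dr d 0) by (destruct k; simpl; [pose proof (Hb 0%nat); lra|apply Hb]).
    pose proof (Hb k). apply Rabs_le. lra.
Qed.

Lemma q_abs_series d z : alt_lyndon d -> 0 <= z < 1 -> ex_series (fun n => Rabs (q d n * z ^ n)).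
Proof.
  intros Hd Hz. apply (ex_series_R_le _ (fun n => (dr d 0 + 1) * z ^ n)).
  - intro n. rewrite Rabs_Rabsolu, Rabs_mult, (Rabs_pos_eq (z ^ n)) by (apply pow_le; lra).
    apply Rmult_le_compat_r; [apply pow_le; lra|apply q_bound; auto].
  - exists ((dr d 0 + 1) * / (1 - z)). apply is_series_R_scal. apply is_series_geom. rewrite Rabs_pos_eq; lra.
Qed.

Lemma prod_id d z : alt_lyndon d -> 0 <= z < 1 -> ex_series (fun n => hr d n * z ^ n) ->
  Series (fun n => q d n * z ^ n) * Series (fun n => hr d n * z ^ n) = / (1 - z).
Proof.
  intros Hd Hz HH.
  assert (Hqa := q_abs_series d z Hd Hz).
  assert (Hq : ex_series (fun n => q d n * z ^ n)) by (apply ex_series_Rabs; auto).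
  assert (Hha : ex_series (fun n => Rabs (hr d n * z ^ n))).
  { apply (ex_series_ext (fun n => hr d n * z ^ n)); auto. intro n. rewrite Rabs_pos_eq; auto.
    apply Rmult_le_pos; [unfold hr; apply pos_INR|apply pow_le; lra]. }
  pose proof (is_series_mult _ _ _ _ (Series_correct _ Hq) (Series_correct _ HH) Hqa Hha) as P.
  apply is_series_unique in P. rewrite <- P.
  apply is_series_unique.
  apply (is_series_ext (fun n => z ^ n)).
  - intro n. rewrite <- (Rmult_1_r (z ^ n)). rewrite <- (conv d Hd n). rewrite scal_sum.
    apply sum_eq. intros i Hi. replace (z ^ n) with (z ^ i * z ^ (n - i)).
    + ring.
    + rewrite <- pow_add. f_equal. lia.
  - apply is_series_geom. rewrite Rabs_pos_eq; lra.
Qed.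

Lemma radius d R0 : alt_lyndon d -> 0 <= R0 < 1 -> Rbar_lt (Rabs R0) (CV_radius (q d)).
Proof.
  intros Hd HR. set (r := (1 + R0) / 2).
  assert (H : Rbar_le r (CV_radius (q d))).
  { apply (proj1 (CV_radius_bounded (q d))). exists (dr d 0 + 1). intro n.
    rewrite Rabs_mult. rewrite <- (Rmult_1_r (dr d 0 + 1)).
    apply Rmult_le_compat; try apply Rabs_pos; [apply q_bound; auto|].
    rewrite <- RPow_abs. rewrite <- (pow1 n). apply pow_maj_Rabs.
    rewrite Rabs_Rabsolu. unfold r. rewrite Rabs_pos_eq; lra. }
  eapply Rbar_lt_le_trans; [|exact H]. simpl. rewrite Rabs_pos_eq; unfold r; lra.
Qed.

Lemma cont_q d R0 : alt_lyndon d -> 0 <= R0 < 1 -> continuity_pt (PSeries (q d)) R0.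
Proof. intros. apply PSeries_continuity, radius; auto. Qed.

Lemma terms_eq d x : x <> 0 ->
  (fun j => INR (d j) / (- x) ^ (S j)) = (fun j => dr d j * (- / x) ^ (S j)).
Proof.
  intro Hx. apply functional_extensionality. intro j. unfold dr, Rdiv.
  replace (- / x) with (/ (- x)) by (field; auto). rewrite pow_inv. reflexivity.
Qed.

Theorem proposition3 (d : word) (beta : R) :
  alt_lyndon d ->
  Un_cv (fun n => ln (INR (factor_count d (S n))) / INR (S n)) (ln beta) ->
  ln beta > 0 ->
  is_solution d beta /\ (forall x : R, is_solution d x -> x <= beta).
Proof.
  intros Hd Hcv Hlb.
  assert (Hb1 : beta > 1) by (apply ln_pos_gt1; auto).
  set (h := hr d).
  assert (Hcv' : Un_cv (fun n => ln (h (S n)) / INR (S n)) (ln beta)).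
  { intros eps He. destruct (Hcv eps He) as [N HN]. exists N. intros n Hn.
    unfold h, hr. rewrite <- factor_count_eq by auto. apply HN; auto. }
  assert (Hpos : forall n, 1 <= h n).
  { intro n. unfold h, hr. apply (le_INR 1). apply hh_pos; auto. }
  assert (Hsub : forall m n, h (m + n)%nat <= h m * h n).
  { intros m n. unfold h, hr. rewrite <- mult_INR. apply le_INR, hh_submult. }
  assert (Hlow : forall n, beta ^ n <= h n).
  { intro n. apply (fekete_pow h beta); auto; try lra. }
  set (R0 := / beta).
  assert (HR0 : 0 < R0 < 1).
  { unfold R0. split; [apply Rinv_0_lt_compat; lra|].
    rewrite <- Rinv_1. apply Rinv_lt_contravar; lra. }
  assert (HbR : beta * R0 = 1) by (unfold R0; field; lra).
  assert (HH : forall z, 0 < z < R0 -> ex_series (fun n => h n * z ^ n)).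
  { intros z Hz. apply (growth_upper h beta z); auto; try lra. nra. }
  assert (Hprod : forall z, 0 < z < R0 ->
     Series (fun n => q d n * z ^ n) * Series (fun n => h n * z ^ n) = / (1 - z)).
  { intros z Hz. apply prod_id; auto; lra. }
  assert (Hge : forall z, 0 < z < R0 -> / (1 - beta * z) <= Series (fun n => h n * z ^ n)).
  { intros z Hz. assert (Hbz : 0 <= beta * z < 1) by nra.
    rewrite <- (is_series_unique (fun n => (beta * z) ^ n) (/ (1 - beta * z))).
    - apply Series_le; [|apply HH; auto]. intro n. split; [apply pow_le; lra|].
      rewrite Rpow_mult_distr. apply Rmult_le_compat_r; [apply pow_le; lra|auto].
    - apply is_series_geom. rewrite Rabs_pos_eq; lra. }
  split.
  -
    assert (HS : ex_series (fun j => dr d j * (- R0) ^ (S j))).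
    { apply ex_series_Rabs. apply (ex_series_R_le _ (fun j => (dr d 0 * R0) * R0 ^ j)).
      - intro j. rewrite Rabs_Rabsolu, Rabs_mult, <- RPow_abs, Rabs_Ropp.
        rewrite (Rabs_pos_eq R0) by lra.
        rewrite Rabs_pos_eq by (unfold dr; apply pos_INR). simpl.
        assert (dr d j <= dr d 0) by (unfold dr; apply le_INR, (proj1 Hd)).
        assert (0 <= R0 ^ j) by (apply pow_le; lra). replace (dr d 0 * R0 * R0 ^ j) with (dr d 0 * (R0 * R0 ^ j)) by ring. apply Rmult_le_compat_r; [apply Rmult_le_pos; lra|auto].
      - exists ((dr d 0 * R0) * / (1 - R0)). apply is_series_R_scal. apply is_series_geom.
        rewrite Rabs_pos_eq; lra. }
    set (S0 := Series (fun j => dr d j * (- R0) ^ (S j))).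
    assert (HQ : PSeries (q d) R0 = 1 + (1 + R0) * S0).
    { apply is_series_unique. apply qlink. apply Series_correct; auto. }
    assert (Hzero : PSeries (q d) R0 = 0).
    { set (c := PSeries (q d) R0).
      destruct (Req_dec c 0) as [E|Hc]; auto. exfalso.
      pose proof (cont_q d R0 Hd ltac:(lra)) as Hcont.
      destruct (Hcont (Rabs c / 2)) as [alp [Halp Hal]]; [apply Rabs_pos_lt in Hc; lra|].
      set (t := Rmin (Rmin (alp / 2) (R0 / 2)) ((Rabs c / 2) * (1 - R0) / (2 * beta))).
      assert (Hcp : 0 < Rabs c) by (apply Rabs_pos_lt; auto).
      assert (Ht0 : 0 < t).
      { unfold t. repeat apply Rmin_pos; try lra. apply Rdiv_lt_0_compat; [|lra].
        apply Rmult_lt_0_compat; lra. }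
      assert (Ht1 : t <= alp / 2) by (unfold t; eapply Rle_trans; [apply Rmin_l|apply Rmin_l]).
      assert (Ht2 : t <= R0 / 2) by (unfold t; eapply Rle_trans; [apply Rmin_l|apply Rmin_r]).
      assert (Ht3 : t <= (Rabs c / 2) * (1 - R0) / (2 * beta)) by (unfold t; apply Rmin_r).
      set (z := R0 - t).
      assert (Hz : 0 < z < R0) by (unfold z; lra).
      specialize (Hal z). simpl in Hal. unfold R_dist in Hal.
      assert (Hd1 : Rabs (PSeries (q d) z - c) < Rabs c / 2).
      { apply Hal. split.
        - unfold D_x, no_cond. split; auto. unfold z; lra.
        - unfold z. replace (R0 - t - R0) with (- t) by ring. rewrite Rabs_Ropp, Rabs_pos_eq; lra. }
      set (Qz := PSeries (q d) z). set (Hz' := Series (fun n => h n * z ^ n)).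
      assert (E1 : Qz * Hz' = / (1 - z)) by (apply Hprod; auto).
      assert (E2 : / (1 - beta * z) <= Hz') by (apply Hge; auto).
      assert (HA : 0 < 1 - beta * z) by nra.
      assert (HB : 0 < 1 - z) by lra.
      assert (E3 : / (1 - beta * z) * (1 - beta * z) = 1) by (field; lra).
      assert (E4 : / (1 - z) * (1 - z) = 1) by (field; lra).
      assert (HIA : 0 < / (1 - beta * z)) by (apply Rinv_0_lt_compat; lra).
      assert (HIB : 0 < / (1 - z)) by (apply Rinv_0_lt_compat; lra).
      assert (HQp : 0 < Qz) by nra.
      assert (HQu : Qz * (1 - z) <= 1 - beta * z).
      { assert (Qz * / (1 - beta * z) <= / (1 - z)) by nra.
        assert (Qz * / (1 - beta * z) * ((1 - beta * z) * (1 - z)) <= / (1 - z) * ((1 - beta * z) * (1 - z))).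
        { apply Rmult_le_compat_r; [nra|auto]. }
        nra. }
      assert (Hbz : 1 - beta * z = beta * t) by (unfold z; nra).
      assert (HQu2 : Qz <= Rabs c / 4).
      { assert (Qz * (1 - R0) <= beta * t) by (unfold z in *; nra).
        assert (beta * t <= Rabs c / 4 * (1 - R0)).
        { apply (Rmult_le_compat_l beta) in Ht3; [|lra].
          replace (beta * (Rabs c / 2 * (1 - R0) / (2 * beta))) with (Rabs c / 4 * (1 - R0)) in Ht3 by (field; lra).
          lra. }
        nra. }
      fold c in Hd1. fold Qz in Hd1. apply Rabs_def2 in Hd1.
      destruct (Rle_dec 0 c).
      + rewrite Rabs_pos_eq in * by lra. lra.
      + rewrite Rabs_left in * by lra. lra. }
    assert (HS0 : S0 = - beta / (beta + 1)).
    { rewrite Hzero in HQ. unfold R0 in HQ.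
      apply (Rmult_eq_reg_l (1 + / beta)); [|assert (0 < / beta) by (apply Rinv_0_lt_compat; lra); lra].
      field_simplify; [|lra|lra]. field_simplify in HQ; [|lra]. lra. }
    split; [lra|]. split; [lra|].
    apply is_series_Reals. rewrite terms_eq by lra. fold R0. rewrite <- HS0.
    apply Series_correct; auto.
  -
    intros x [Hx0 [Hx1 Hx]]. destruct (Rle_dec x beta) as [|Hxb]; auto. exfalso.
    apply Rnot_le_lt in Hxb.
    set (z := / x).
    assert (Hz : 0 < z < R0).
    { unfold z, R0. split; [apply Rinv_0_lt_compat; lra|]. apply Rinv_lt_contravar; nra. }
    apply is_series_Reals in Hx. rewrite terms_eq in Hx by auto. fold z in Hx.
    apply qlink in Hx. apply is_series_unique in Hx.
    replace (1 + (1 + z) * (- x / (x + 1))) with 0 in Hx by (unfold z; field; lra).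
    pose proof (Hprod z Hz) as P. rewrite Hx, Rmult_0_l in P.
    assert (0 < / (1 - z)) by (apply Rinv_0_lt_compat; lra). lra.
Qed.
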